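(* Let $R$ be a ring. If $Q_l(R)$ is a left artinian ring, then $S_0(R)=\mathcal C_R$ (in particular $\mathcal C_R$ is a left Ore set) and $Q_{cl}(R)=Q_l(R)$.
   Context: Rings are associative with $1$. $\mathcal C_R$ is the set of regular elements of $R$. A multiplicatively closed subset $S$ ($1\in S$, $0\notin S$) is a left Ore set if $Sr\cap Rs\ne\emptyset$ for all $r\in R,s\in S$, and a left denominator set if moreover $rs=0$ ($s\in S$) implies $tr=0$ for some $t\in S$. $S_0(R)$ is the largest left denominator set of $R$ contained in $\mathcal C_R$ (it exists), $Q_l(R):=S_0(R)^{-1}R$, and $Q_{cl}(R):=\mathcal C_R^{-1}R$ is the classical left quotient ring. *)

(* Defs.v *)
From mathcomp Require Import all_boot all_algebra.
Set Implicit Arguments. Unset Strict Implicit. Unset Printing Implicit Defensive.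
Import GRing.Theory.
Local Open Scope ring_scope.

Definition regular (R : nzRingType) (c : R) : Prop :=
  (forall x : R, c * x = 0 -> x = 0) /\ (forall x : R, x * c = 0 -> x = 0).

Definition mult_closed (R : nzRingType) (S : R -> Prop) : Prop :=
  [/\ S 1, (forall s t, S s -> S t -> S (s * t)) & ~ S 0].

Definition left_Ore (R : nzRingType) (S : R -> Prop) : Prop :=
  mult_closed S /\
  (forall (r s : R), S s -> exists s' r', S s' /\ s' * r = r' * s).

Definition left_denominator (R : nzRingType) (S : R -> Prop) : Prop :=
  left_Ore S /\
  (forall (r s : R), S s -> r * s = 0 -> exists t, S t /\ t * r = 0).

Definition largest_left_denominator_in_regular (R : nzRingType) (S0 : R -> Prop)
  : Prop :=
  [/\ left_denominator S0, (forall x, S0 x -> regular x) &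
      (forall S : R -> Prop, left_denominator S ->
         (forall x, S x -> regular x) -> forall x, S x -> S0 x)].

(* f : R -> Q is a left ring of fractions S^{-1}R of R w.r.t. S
   (characterization of S^{-1}R up to isomorphism). *)
Definition is_left_localization (R : nzRingType) (Q : unitRingType)
  (S : R -> Prop) (f : {rmorphism R -> Q}) : Prop :=
  [/\ (forall s, S s -> f s \is a GRing.unit),
      (forall q : Q, exists s r, S s /\ q = (f s)^-1 * f r) &
      (forall r, f r = 0 <-> exists s, S s /\ s * r = 0)].

Definition left_ideal (Q : nzRingType) (I : Q -> Prop) : Prop :=
  [/\ I 0, (forall x y, I x -> I y -> I (x + y)) &
      (forall a x, I x -> I (a * x))].

Definition left_artinian (Q : nzRingType) : Prop :=
  forall I : nat -> Q -> Prop,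
    (forall n, left_ideal (I n)) ->
    (forall n x, I n.+1 x -> I n x) ->
    exists n, forall m, (n <= m)%N -> forall x, I m x <-> I n x.

(* Main.v *)
Require Import Defs.
From mathcomp Require Import all_boot all_algebra.
Local Open Scope ring_scope.
Import GRing.Theory.

Lemma art_unit (Q : unitRingType) (x : Q) :
  left_artinian Q -> (forall y : Q, y * x = 0 -> y = 0) -> x \is a GRing.unit.
Proof.
move=> Hart Hreg.
have Hpow : forall n (y : Q), y * x ^+ n = 0 -> y = 0.
  elim=> [|n IH] y; first by rewrite expr0 mulr1.
  by rewrite exprSr mulrA => /Hreg /IH.
pose I := fun n (y : Q) => exists a, y = a * x ^+ n.
have [||n Hn] := Hart I.
- move=> n; split.
  + by exists 0; rewrite mul0r.
  + by move=> y z [a ->] [b ->]; exists (a + b); rewrite mulrDl.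
  + by move=> a y [b ->]; exists (a * b); rewrite mulrA.
- by move=> n y [a ->]; exists (a * x); rewrite exprS !mulrA.
have : I n.+1 (x ^+ n) by apply/(Hn n.+1 (leqnSn n) (x ^+ n)); exists 1; rewrite mul1r.
move=> [a Ha].
have Hl : a * x = 1.
  apply/eqP; rewrite -subr_eq0; apply/eqP; apply: (Hpow n).
  by rewrite mulrBl mul1r {2}Ha exprS !mulrA subrr.
apply/GRing.unitrP; exists a; split => //.
apply/eqP; rewrite -subr_eq0; apply/eqP; apply: Hreg.
by rewrite mulrBl mul1r -mulrA Hl mulr1 subrr.
Qed.

Theorem corollary2p10 (R : nzRingType) (S0 : R -> Prop)
  (Q : unitRingType) (f : {rmorphism R -> Q}) :
  largest_left_denominator_in_regular S0 ->
  is_left_localization S0 f ->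
  left_artinian Q ->
  [/\ (forall x : R, S0 x <-> regular x),
      left_Ore (@regular R) &
      is_left_localization (@regular R) f].
Proof.
move=> [HS0den HS0reg HS0max] [Hunit Hrep Hker] Hart.
have Hinj : forall r, f r = 0 -> r = 0.
  move=> r /Hker [s [Ss Hsr]]; exact: (proj1 (HS0reg s Ss)) r Hsr.
have Hinj2 : forall a b, f a = f b -> a = b.
  move=> a b E; apply/eqP; rewrite -subr_eq0; apply/eqP; apply: Hinj.
  by rewrite rmorphB E subrr.
have Hcunit : forall c, regular c -> f c \is a GRing.unit.
  move=> c [_ Hc]; apply: art_unit => // y.
  have [s [r [Ss ->]]] := Hrep y.
  move=> E.
  have : f (r * c) = 0.
    have := congr1 (fun z => f s * z) E.
    by rewrite mulr0 !mulrA mulrV ?Hunit // mul1r rmorphM.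
  move/Hinj/Hc => ->; by rewrite rmorph0 mulr0.
have Hore : left_Ore (@regular R).
  split.
    split.
    - by split=> x; rewrite ?mul1r ?mulr1.
    - move=> s t [Hs1 Hs2] [Ht1 Ht2]; split=> x.
        by rewrite -mulrA => /Hs1 /Ht1.
      by rewrite mulrA => /Ht2 /Hs2.
    - move=> [H _]; have := H 1; rewrite mul0r => /(_ erefl) /eqP.
      by rewrite oner_eq0.
  move=> r c Hc.
  have [s [r' [Ss E]]] := Hrep (f r * (f c)^-1).
  exists s, r'; split; first exact: HS0reg.
  apply: Hinj2; rewrite !rmorphM.
  have := congr1 (fun z => f s * z * f c) E.
  have -> : f s * (f r * (f c)^-1) * f c = f s * f r.
    by rewrite -mulrA mulrVK ?Hcunit.
  have -> : f s * ((f s)^-1 * f r') * f c = f r' * f c.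
    by rewrite mulrA mulrV ?Hunit // mul1r.
  by [].
have Hden : left_denominator (@regular R).
  split => // r s Hs Hrs; exists 1; split.
    by split=> x; rewrite ?mul1r ?mulr1.
  by rewrite mul1r; exact: (proj2 Hs) r Hrs.
have Heq : forall x, S0 x <-> regular x.
  move=> x; split; first exact: HS0reg.
  by apply: (HS0max _ Hden).
split => //; split.
- exact: Hcunit.
- move=> q; have [s [r [Ss ->]]] := Hrep q; exists s, r; split => //.
  exact: HS0reg.
- move=> r; split.
    move=> /Hker [s [Ss H]]; exists s; split => //; exact: HS0reg.
  move=> [s [[Hs _] H]]; by rewrite (Hs r H) rmorph0.
Qed.
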